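(* Let $q\ge 2$ be an integer, and let $\Gamma=(V,E)$ be a complete digraph on $\lceil 2q\ln q\rceil$ vertices with weights $w(e)\in\mathbb{Z}_q$ on its edges. Then $\Gamma$ contains a directed cycle $C$ whose total weight $\sum_{e\in C} w(e)$ is $0$ in $\mathbb{Z}_q$.
   Context: A complete digraph is a digraph in which every ordered pair $(u,v)$ of distinct vertices is joined by exactly one directed edge from $u$ to $v$ (so each pair of vertices is connected by one edge in each direction). Directed cycles may have length $2$. *)

(* Defs.v *)
From mathcomp Require Import all_boot all_order all_algebra.
From mathcomp Require Import all_classical all_reals exp.
Set Implicit Arguments. Unset Strict Implicit. Unset Printing Implicit Defensive.
Import Order.TTheory GRing.Theory Num.Theory.
Local Open Scope ring_scope.

(* Number of vertices: ceil(2 q ln q), computed in an arbitrary realType R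
   (the value does not depend on R). *)
Definition nverts (R : realType) (q : nat) : nat :=
  `| Num.ceil (2 * q%:R * ln (q%:R : R)) |%N.

(* A complete digraph on vertex set 'I_n with Z_q weights is a function
   w : 'I_n -> 'I_n -> 'Z_q; w u v is the weight of the edge u -> v (u != v).
   Values on the diagonal are never used. *)

(* A directed cycle: a sequence of >= 2 pairwise distinct vertices
   v_0, ..., v_{k-1}, with edges v_i -> v_{i+1} and v_{k-1} -> v_0. *)
Definition is_dcycle (n : nat) (s : seq 'I_n) : bool := (1 < size s)%N && uniq s.

Definition dcycle_edges (n : nat) (s : seq 'I_n) : seq ('I_n * 'I_n) :=
  zip s (rot 1 s).

Definition dcycle_weight (n q : nat) (w : 'I_n -> 'I_n -> 'Z_q) (s : seq 'I_n) : 'Z_q :=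
  \sum_(e <- dcycle_edges s) w e.1 e.2.

(* Main.v *)
Require Import Defs.
From mathcomp Require Import all_boot all_order all_algebra.
From mathcomp Require Import all_classical all_reals exp.
From mathcomp Require Import ring lra zify.
Import Order.TTheory GRing.Theory Num.Theory.
Local Open Scope ring_scope.

(* Proof: a vertex-by-vertex "detour" construction with
   stabilizer-subgroup recursion gives a zero cycle on 4q-5 vertices,
   and 4q-5 <= ceil(2 q ln q) for q >= 2. *)

Section All.
Set Implicit Arguments. Unset Strict Implicit. Unset Printing Implicit Defensive.

Lemma ar4 (h x y : nat) : x = (1 + y)%N -> (4 * h <= x + 5)%N -> (4 * h <= y + 2 * 1 + 4)%N.
Proof. move=> e a; rewrite e in a; lia. Qed.
Lemma ar1 (r r' m : nat) : r = r'.+2 -> (r <= m.+1)%N -> (r' <= m)%N.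
Proof. move=> -> h; lia. Qed.
Lemma ar2 (h r r' t t' : nat) : (4 * h <= r + 2 * t + 4)%N -> r = r'.+2 -> (t < t')%N ->
  (4 * h <= r' + 2 * t' + 4)%N.
Proof. move=> a e b; rewrite e in a; lia. Qed.
Lemma ar3 (h k r t : nat) : (2 * k <= h)%N -> (0 < k)%N -> (0 < t)%N -> (t < h)%N ->
  (4 * h <= r + 2 * t + 4)%N -> [/\ (k < h)%N, (2 <= r)%N & (4 * k <= r + 5)%N].
Proof. move=> *; split; lia. Qed.

Section Comb.
Variables (n q : nat).
Local Notation V := ('I_n).
Local Notation G := ('Z_q).
Implicit Types (w : V -> V -> G) (T H K : {set G}).

Definition pw w (x : V) (r : seq V) : G := \sum_(e <- zip (x :: r) r) w e.1 e.2.

Lemma pw_rcons w x r v : pw w x (rcons r v) = pw w x r + w (last x r) v.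
Proof.
elim: r x => [|a r IH] x /=; first by rewrite /pw /= big_cons big_nil add0r addr0.
by rewrite /pw /= !big_cons -/(pw w a (rcons r v)) IH -/(pw w a r) addrA.
Qed.

Lemma zip_rcons_sum w x r y :
  \sum_(e <- zip (x :: r) (rcons r y)) w e.1 e.2 = pw w x r + w (last x r) y.
Proof.
elim: r x => [|a r IH] x /=; first by rewrite /pw /= !big_cons !big_nil addr0 add0r.
by rewrite !big_cons IH /pw /= big_cons addrA.
Qed.

Lemma dcw_cons w x r : dcycle_weight w (x :: r) = pw w x r + w (last x r) x.
Proof. by rewrite /dcycle_weight /dcycle_edges rot1_cons zip_rcons_sum. Qed.

Lemma dcw_shift w (p : V -> G) s :
  dcycle_weight (fun u v => w u v + p u - p v) s = dcycle_weight w s.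
Proof.
rewrite /dcycle_weight /dcycle_edges big_split big_split /= sumrN.
have e1 : \sum_(e <- zip s (rot 1 s)) p e.1 = \sum_(x <- s) p x.
  by rewrite -(big_map fst xpredT p) [map _ _]unzip1_zip // size_rot.
have e2 : \sum_(e <- zip s (rot 1 s)) p e.2 = \sum_(x <- s) p x.
  rewrite -(big_map snd xpredT p) [map _ _]unzip2_zip ?size_rot //.
  by apply: perm_big; rewrite perm_rot.
by rewrite e1 e2 addrK.
Qed.

Definition subgrp H := 0 \in H /\ (forall x y, x \in H -> y \in H -> x - y \in H).

Lemma subgrpD H x y : subgrp H -> x \in H -> y \in H -> x + y \in H.
Proof.
case=> H0 HB xH yH; have := HB x (0 - y) xH (HB _ _ H0 yH).
by rewrite sub0r opprK.
Qed.

Definition shift T d := [set y | y - d \in T].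
Lemma mem_shift T d y : (y \in shift T d) = (y - d \in T). Proof. by rewrite finset.inE. Qed.
Lemma card_shift T d : #|shift T d| = #|T|.
Proof. exact: (card_preimset T (addIr (- d))). Qed.

Definition stab T := [set d | [forall x in T, x + d \in T]].
Lemma stabP T d : reflect (forall x, x \in T -> x + d \in T) (d \in stab T).
Proof. by rewrite finset.inE; apply: (iffP forall_inP). Qed.

Lemma stab_sub T d x : d \in stab T -> x \in T -> x - d \in T.
Proof.
move=> /stabP dT xT.
have sub : shift T d \subset T.
  by apply/fintype.subsetP => y; rewrite mem_shift => /dT; rewrite subrK.
have e : shift T d = T by apply/eqP; rewrite eqEcard sub card_shift leqnn.
by rewrite -mem_shift e.
Qed.

Lemma stab_subgrp T : subgrp (stab T).
Proof.
split; first by apply/stabP => x; rewrite addr0.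
move=> d1 d2 /stabP h1 h2; apply/stabP => x xT.
by rewrite addrA stab_sub // h1.
Qed.

Lemma stab_half T H : subgrp H -> T \subset H -> T != finset.set0 -> (#|T| < #|H|)%N ->
  (2 * #|stab T| <= #|H|)%N.
Proof.
move=> sH TH /set0Pn [t tT] ltTH.
have KH : stab T \subset H.
  apply/fintype.subsetP => d /stabP dK.
  have := sH.2 _ _ (fintype.subsetP TH _ (dK t tT)) (fintype.subsetP TH _ tT).
  by rewrite addrAC subrr add0r.
have [a aH aK] : exists2 a, a \in H & a \notin stab T.
  case: (boolP (H \subset stab T)) => [HK|]; last by case/subsetPn=> a; exists a.
  have HT : H \subset T.
    apply/fintype.subsetP => h hH.
    have := (stabP _ _ (fintype.subsetP HK _ (sH.2 _ _ hH (fintype.subsetP TH _ tT)))) t tT.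
    by rewrite addrC subrK.
  by have := subset_leq_card HT; rewrite leqNgt ltTH.
have disj : stab T :&: shift (stab T) a = finset.set0.
  apply/setP => x; rewrite finset.in_setI mem_shift finset.in_set0.
  apply/negbTE/negP => /andP [xK xaK].
  have := (stab_subgrp T).2 _ _ xK xaK.
  by rewrite opprB addrC subrK (negbTE aK).
have sub2 : stab T :|: shift (stab T) a \subset H.
  apply/fintype.subsetP => x; rewrite finset.in_setU mem_shift => /orP [xK|xaK].
    exact: (fintype.subsetP KH x xK).
  by have := subgrpD sH (fintype.subsetP KH _ xaK) aH; rewrite subrK.
have := subset_leq_card sub2.
rewrite cardsU disj cards0 subn0 card_shift => h.
by rewrite mul2n -addnn.
Qed.

Definition zc w := exists s : seq V, is_dcycle s /\ dcycle_weight w s = 0.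

Definition paths_inv w (v0 : V) (U : {set V}) (c : V) T :=
  forall s, s \in T -> exists r : seq V,
    [/\ uniq (v0 :: r), {subset v0 :: r <= U}, last v0 r = c & pw w v0 r = s].

Definition IHo_t H := forall K, (#|K| < #|H|)%N -> subgrp K -> forall (X' : {set V}) w',
      (forall u v, u \in X' -> v \in X' -> u != v -> w' u v \in K) ->
      (2 <= #|X'|)%N -> (4 * #|K| <= #|X'| + 5)%N -> zc w'.

Lemma stall H (X U : {set V}) w c T :
  subgrp H -> IHo_t H -> T \subset H -> T != finset.set0 -> (#|T| < #|H|)%N ->
  (4 * #|H| <= #|X :\: U| + 2 * #|T| + 4)%N ->
  (forall u v, u \in X :\: U -> v \in X :\: U -> u != v ->
      w u v + w c u - w c v \in stab T) -> zc w.
Proof.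
move=> sH IHo TH T0 ltTH hc hst.
have hK := stab_half sH TH T0 ltTH.
have K0 : (0 < #|stab T|)%N by apply/card_gt0P; exists 0; have [] := stab_subgrp T.
have T1 : (0 < #|T|)%N by rewrite card_gt0.
have [s [sd sw]] : zc (fun u v => w u v + w c u - w c v).
  have [a1 a2 a3] := ar3 hK K0 T1 ltTH hc.
  by apply: (IHo (stab T) a1 (stab_subgrp T) (X :\: U)).
by exists s; split => //; rewrite -(dcw_shift w (fun u => w c u)).
Qed.


Definition ext_set w c u v T := shift T (w c v) :|: shift T (w c u + w u v).

Lemma extend H (X U : {set V}) w v0 c T u v :
  subgrp H -> (forall u v, u \in X -> v \in X -> u != v -> w u v \in H) ->
  U \subset X -> v0 \in U -> c \in U -> T \subset H -> paths_inv w v0 U c T ->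
  u \in X :\: U -> v \in X :\: U -> u != v ->
  w u v + w c u - w c v \notin stab T ->
  [/\ ext_set w c u v T \subset H, paths_inv w v0 (v |: (u |: U)) v (ext_set w c u v T)
    & (#|T| < #|ext_set w c u v T|)%N].
Proof.
move=> sH wH UX v0U cU TH pT; rewrite !finset.in_setD => /andP [uU uX] /andP [vU vX] uv hd.
have cX := fintype.subsetP UX _ cU.
have cu : c != u by apply: contraNneq uU => <-.
have cv : c != v by apply: contraNneq vU => <-.
have wcv := wH _ _ cX vX cv.
have wcuv : w c u + w u v \in H by apply: subgrpD sH (wH _ _ cX uX cu) (wH _ _ uX vX uv).
split.
- apply/fintype.subsetP => y; rewrite finset.in_setU !mem_shift => /orP [] hy.
  + by have := subgrpD sH (fintype.subsetP TH _ hy) wcv; rewrite subrK.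
  + by have := subgrpD sH (fintype.subsetP TH _ hy) wcuv; rewrite subrK.
- move=> s; rewrite finset.in_setU !mem_shift => /orP [] /pT [r [ur sr lr pr]].
  + exists (rcons r v); split.
    * rewrite -rcons_cons rcons_uniq ur andbT; apply/negP => /sr.
      by rewrite (negbTE vU).
    * move=> z; rewrite -rcons_cons mem_rcons in_cons => /orP [/eqP ->|/sr zU].
        by rewrite !finset.inE ?eqxx.
      by rewrite !finset.inE zU !orbT.
    * by rewrite last_rcons.
    * by rewrite pw_rcons lr pr subrK.
  + exists (rcons (rcons r u) v); split.
    * rewrite -!rcons_cons !rcons_uniq ur andbT mem_rcons in_cons negb_or eq_sym uv /=.
      apply/andP; split; apply/negP => /sr; by rewrite ?(negbTE vU) ?(negbTE uU).
    * move=> z; rewrite -!rcons_cons mem_rcons in_cons mem_rcons in_cons => /or3P [/eqP ->|/eqP ->|/sr zU].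
      - by rewrite !finset.inE ?eqxx.
      - by rewrite !finset.inE ?eqxx ?orbT.
      - by rewrite !finset.inE zU !orbT.
    * by rewrite last_rcons.
    * by rewrite !pw_rcons last_rcons lr -addrA pr subrK.
- move: hd; rewrite finset.inE negb_forall_in => /exists_inP [t tT ht].
  rewrite -(card_shift T (w c v)); apply: proper_card; apply/properP; split.
    by apply/fintype.subsetP => y yT; rewrite finset.in_setU yT.
  exists (t + (w c u + w u v)).
    by rewrite finset.in_setU !mem_shift addrK tT orbT.
  rewrite mem_shift.
  have -> : t + (w c u + w u v) - w c v = t + (w u v + w c u - w c v) by ring.
  exact: ht.
Qed.

Lemma step H (X : {set V}) w v0 :
  subgrp H -> (forall u v, u \in X -> v \in X -> u != v -> w u v \in H) -> IHo_t H ->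
  forall m U c T, (#|X :\: U| <= m)%N -> U \subset X -> v0 \in U -> c \in U ->
  T \subset H -> T != finset.set0 -> paths_inv w v0 U c T -> (#|T| < #|H|)%N ->
  (4 * #|H| <= #|X :\: U| + 2 * #|T| + 4)%N -> zc w.
Proof.
move=> sH wH IHo; elim=> [|m IHm] U c T hm UX v0U cU TH T0 pT ltTH hc;
  (case: (boolP [exists u, exists v, [&& u \in X :\: U, v \in X :\: U, u != v &
     w u v + w c u - w c v \notin stab T]]) => [hex|hn]; last first).
1,3: apply: (stall (c:=c) sH IHo TH T0 ltTH hc) => u v uR vR uv;
   move/existsPn: hn => /(_ u) /existsPn /(_ v); by rewrite uR vR uv /= negbK.
all: case/existsP: hex => u /existsP [v /and4P [uR vR uv hd]].
  by move: hm; rewrite leqn0 cards_eq0 => /eqP e; rewrite e finset.in_set0 in uR.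
have [T'H pT' ltT'] := extend sH wH UX v0U cU TH pT uR vR uv hd.
have v0v : v0 != v by apply: contraTneq vR => <-; rewrite finset.in_setD v0U.
have vu : v != u by rewrite eq_sym.
have eR : X :\: (v |: (u |: U)) = ((X :\: U) :\ u) :\ v.
  by apply/setP => z; rewrite !finset.inE; case: (z == v); case: (z == u).
have cR : #|X :\: U| = (#|X :\: (v |: (u |: U))|).+2.
  rewrite eR (cardsD1 u (X :\: U)) uR (cardsD1 v ((X :\: U) :\ u)) in_setD1 vu vR.
  by rewrite !add1n.
case: (ltnP #|ext_set w c u v T| #|H|) => hT'.
  apply: (IHm (v |: (u |: U)) v (ext_set w c u v T)) => //.
  - exact: ar1 cR hm.
  - apply/fintype.subsetP => z; rewrite !finset.inE => /or3P [/eqP->|/eqP->|/(fintype.subsetP UX) //].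
      by move: vR; rewrite finset.in_setD => /andP [].
    by move: uR; rewrite finset.in_setD => /andP [].
  - by rewrite !finset.inE v0U !orbT.
  - by rewrite !finset.inE ?eqxx.
  - by rewrite -card_gt0 (leq_ltn_trans _ ltT').
  - exact: ar2 hc cR ltT'.
have eT : ext_set w c u v T = H by apply/eqP; rewrite eqEcard T'H hT'.
have vX : v \in X by move: vR; rewrite finset.in_setD => /andP [].
have v0X := fintype.subsetP UX _ v0U.
have wvv0 : w v v0 \in H by apply: wH => //; rewrite eq_sym.
have : - w v v0 \in ext_set w c u v T.
  by rewrite eT -sub0r; apply: sH.2 => //; exact: sH.1.
case/pT' => r [ur sr lr pr].
exists (v0 :: r); split.
  rewrite /is_dcycle ur andbT /=.
  by case: r {ur sr pr} lr => //= lr; move: v0v; rewrite lr eqxx.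
by rewrite dcw_cons pr lr addNr.
Qed.
Theorem claim k : forall H, (#|H| <= k)%N -> subgrp H -> forall (X : {set V}) w,
  (forall u v, u \in X -> v \in X -> u != v -> w u v \in H) ->
  (2 <= #|X|)%N -> (4 * #|H| <= #|X| + 5)%N -> zc w.
Proof.
elim: k => [|k IHk] H hk sH X w wH X2 X4.
  by move: hk; rewrite leqn0 cards_eq0 => /eqP e; move: sH.1; rewrite e finset.in_set0.
have [u uX] : exists u, u \in X by apply/card_gt0P; exact: leq_trans X2.
have cX : #|X| = (1 + #|X :\ u|)%N by rewrite (cardsD1 u X) uX.
have [v vX] : exists v, v \in X :\ u.
  by apply/card_gt0P; move: X2; rewrite cX add1n ltnS.
case: (ltnP 1 #|H|) => hH.
  apply: (step (v0:=u) (U:=[set u]) (c:=u) (T:=[set 0]) sH wH _ (leqnn _)).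
  - move=> K hK sK X' w' wK X'2 X'4; apply: (IHk K _ sK X' w' wK X'2 X'4).
    by rewrite -ltnS; exact: leq_trans hK hk.
  - by rewrite finset.sub1set.
  - by rewrite set11.
  - by rewrite set11.
  - by rewrite finset.sub1set; exact: sH.1.
  - by apply/set0Pn; exists 0; rewrite set11.
  - move=> s; rewrite finset.in_set1 => /eqP ->; exists [::]; split => //.
      by move=> z; rewrite mem_seq1 => /eqP ->; rewrite set11.
    by rewrite /pw big_nil.
  - by rewrite cards1.
  - by rewrite cards1; exact: ar4 cX X4.
have H0 : forall x, x \in H -> x = 0.
  move=> x xH; apply/eqP; apply: contraTT hH => x0; rewrite -ltnNge.
  have : [set x; 0] \subset H.
    by apply/fintype.subsetP => y; rewrite !finset.inE => /orP [] /eqP -> //; exact: sH.1.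
  by move/subset_leq_card; rewrite cards2 x0.
move: vX; rewrite in_setD1 => /andP [vu vX].
have uv : u != v by rewrite eq_sym.
exists [:: u; v]; split.
  by rewrite /is_dcycle /= finset.inE uv.
rewrite dcw_cons /pw /= big_cons big_nil (H0 _ (wH _ _ uX vX uv)) (H0 _ (wH _ _ vX uX vu)).
by rewrite !addr0.
Qed.
End Comb.

Section Num.
Variable R : realType.

Lemma ln_step (a b : R) : 0 < a -> a <= b -> 1 - a / b <= ln b - ln a.
Proof.
move=> a0 ab; have b0 : 0 < b by apply: lt_le_trans ab.
have h := @le_ln1Dx R (a / b - 1).
rewrite [1 + _]addrC subrK ln_div ?posrE // in h.
have : -1 < a / b - 1 by have := divr_gt0 a0 b0; lra.
move/h; lra.
Qed.

Lemma ln_stepn (k : nat) : (0 < k)%N -> 1 / (k.+1)%:R <= ln (k.+1%:R : R) - ln k%:R.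
Proof.
move=> k0; have := @ln_step k%:R k.+1%:R.
rewrite ltr0n k0 ler_nat leqnSn => /(_ isT isT).
suff -> : 1 - k%:R / k.+1%:R = 1 / (k.+1%:R : R) by [].
rewrite -addn1 natrD.
field. by rewrite natr1 pnatr_eq0.
Qed.

Lemma ln2_gt : 2 / 3 < ln (2 : R).
Proof.
have h k := @ln_stepn k.
have h10 := h 10%N isT. have h11 := h 11%N isT. have h12 := h 12%N isT.
have h13 := h 13%N isT. have h14 := h 14%N isT. have h15 := h 15%N isT.
have h16 := h 16%N isT. have h17 := h 17%N isT. have h18 := h 18%N isT.
have h19 := h 19%N isT.
have e : ln (20%:R : R) = ln 2 + ln 10%:R.
  by rewrite -lnM ?posrE // -natrM.
move: h10 h11 h12 h13 h14 h15 h16 h17 h18 h19 e.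
rewrite /=. lra.
Qed.

Lemma lnq_bound (q : nat) : (2 <= q)%N -> 4 * q%:R - 6 < 2 * q%:R * ln (q%:R : R).
Proof.
move=> hq.
have l2 := ln2_gt.
have s2 := @ln_stepn 2%N isT. have s3 := @ln_stepn 3%N isT.
have s4 := @ln_stepn 4%N isT. have s5 := @ln_stepn 5%N isT.
have s6 := @ln_stepn 6%N isT.
have e2 : (2%:R : R) = 2 by [].
case: q hq => [|[|[|[|[|[|[|[|q]]]]]]]] //= hq; move: s2 s3 s4 s5 s6; rewrite ?e2; try lra.
move=> *.
have l8 : ln (8 : R) = 3 * ln 2.
  have -> : (8 : R) = 2 ^+ 3 by rewrite -natrX.
  by rewrite lnXn // mulr_natl.
have lq : ln (8 : R) <= ln q.+4.+4%:R.
  rewrite ler_ln ?posrE ?ltr0n //. by rewrite -[8]/(8%:R) ler_nat.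
have qp : (8 : R) <= q.+4.+4%:R by rewrite -[8]/(8%:R) ler_nat.
nra.
Qed.

Lemma int_aux (q : nat) (n : int) : ((4 * q)%:Z - 6 < n)%R -> (4 * q <= `|n|%N + 5)%N.
Proof. move=> H. lia. Qed.

Lemma nverts_bound (q : nat) : (2 <= q)%N ->
  (4 * q <= `| Num.ceil (2 * q%:R * ln (q%:R : R)) |%N + 5)%N.
Proof.
move=> hq; have h := @lnq_bound q hq.
apply: int_aux.
rewrite ceil_gt_int rmorphB /=.
change (((4 * q)%N%:R : R) - 6%:R < 2 * q%:R * ln (q%:R : R)).
rewrite natrM. move: h. lra.
Qed.
Lemma nverts_bound4 (q : nat) : (2 <= q)%N -> (4 * q <= nverts R q + 5)%N.
Proof. by move=> hq; rewrite /nverts; exact: nverts_bound. Qed.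
End Num.

Lemma ar5 (q N : nat) : (2 <= q)%N -> (4 * q <= N + 5)%N -> (2 <= N)%N.
Proof. move=> *; lia. Qed.

End All.

Theorem lemma4 (R : realType) (q : nat) (hq : (2 <= q)%N)
  (w : 'I_(nverts R q) -> 'I_(nverts R q) -> 'Z_q) :
  exists s : seq 'I_(nverts R q), is_dcycle s /\ dcycle_weight w s = 0.
Proof.
have hb := nverts_bound4 R hq.
have cH : #|[set: 'Z_q]| = q by rewrite cardsT card_ord Zp_cast.
have cV : #|[set: 'I_(nverts R q)]| = nverts R q by rewrite cardsT card_ord.
apply: (@claim (nverts R q) q q [set: 'Z_q] _ _ [set: 'I_(nverts R q)] w).
- by rewrite cH.
- split; first exact: finset.in_setT.
  by move=> *; exact: finset.in_setT.
- by move=> *; exact: finset.in_setT.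
- rewrite cV; exact: ar5 hq hb.
- by rewrite cH cV.
Qed.
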